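(* Let $\mathbf g=(g_1,\dots,g_s)$ and $J=\sqrt[\mathbb R]{\operatorname{supp}\mathcal Q(\mathbf g)}$. Let $\mathbf h=(h_1,\dots,h_m)$ be polynomials with $(\mathbf h)\subseteq J$ and $\deg h_i\le d$ for all $i$. Then there exists $k\ge d$ such that $$\mathcal L_k(\mathbf g)^{[d]}\subseteq\mathcal L_d(\mathbf g,\pm\mathbf h)\subseteq\mathcal L_d(\mathbf g).$$ In particular $\mathcal L_k(\mathbf g)^{[d]}\subseteq\mathcal L_d(\pm\mathbf h)$.
   Context: $\mathbb R[\mathbf X]=\mathbb R[X_1,\dots,X_n]$, $\mathbb R[\mathbf X]_t$ polynomials of degree $\le t$; $\Sigma^2$ sums of squares, $\Sigma^2_t=\Sigma^2\cap\mathbb R[\mathbf X]_t$. For a finite family $G$, $\mathcal Q_t(G)=\{s_0+\sum_{g\in G}s_gg:s_0\in\Sigma^2_t,s_g\in\Sigma^2,\deg s_g\le t-\deg g\}$, $\mathcal Q(G)=\bigcup_t\mathcal Q_t(G)$, $\mathcal L_t(G)=\{\sigma\in(\mathbb R[\mathbf X]_t)^*:\sigma\ge0\text{ on }\mathcal Q_t(G)\}$. $(\mathbf g,\pm\mathbf h)$ denotes the family $g_1,\dots,g_s,h_1,-h_1,\dots,h_m,-h_m$ and $\pm\mathbf h$ the family $h_1,-h_1,\dots,h_m,-h_m$. $\operatorname{supp}Q=Q\cap(-Q)$, $\sqrt[\mathbb R]{I}=\{p:\exists m', s\in\Sigma^2,\ p^{2m'}+s\in I\}$. For $\sigma\in(\mathbb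 R[\mathbf X]_k)^*$, $\sigma^{[d]}$ is its restriction to $\mathbb R[\mathbf X]_d$ and $B^{[d]}=\{\sigma^{[d]}:\sigma\in B\}$. *)

(* Defs.v *)
From HB Require Import structures.
From mathcomp Require Import all_boot all_order all_algebra.
From mathcomp Require Import reals.
From mathcomp Require Import mpoly.

Set Implicit Arguments.
Unset Strict Implicit.
Unset Printing Implicit Defensive.

Import Order.TTheory GRing.Theory Num.Theory.
Local Open Scope ring_scope.

Section Defs.
Variables (R : realType) (n : nat).
Notation poly := {mpoly R[n]}.

(* deg p <= t  (msize p = 1 + total degree, and msize 0 = 0, so 0 has every degree bound) *)
Definition deg_le (p : poly) (t : nat) : Prop := (msize p <= t.+1)%N.

Definition is_sos (p : poly) : Prop :=
  exists s : seq poly, p = \sum_(q <- s) q ^+ 2.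

Definition inQt (t : nat) (G : seq poly) (p : poly) : Prop :=
  exists (s0 : poly) (s : seq poly),
    [/\ is_sos s0, deg_le s0 t, size s = size G,
        forall i, (i < size G)%N ->
          is_sos s`_i /\ (s`_i = 0 \/ (msize s`_i + msize G`_i <= t.+2)%N)
      & p = s0 + \sum_(i < size G) s`_i * G`_i].
(* The degree condition deg s_g <= t - deg g is encoded as
   s_g = 0 or (deg s_g + deg g <= t), i.e. msize s_g + msize g <= t + 2. *)

Definition inQ (G : seq poly) (p : poly) : Prop := exists t, inQt t G p.

Definition suppQ (G : seq poly) (p : poly) : Prop := inQ G p /\ inQ G (- p).

Definition real_radical (I : poly -> Prop) (p : poly) : Prop :=
  exists (m' : nat) (s : poly), is_sos s /\ I (p ^+ (2 * m') + s).

Definition ideal_sub (h : seq poly) (J : poly -> Prop) : Prop :=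
  forall a : seq poly, J (\sum_(i < size h) a`_i * h`_i).

Definition pm (h : seq poly) : seq poly := flatten [seq [:: q; - q] | q <- h].

(* A functional sigma in (R[X]_t)^* is represented by a function
   poly -> R; only its values on polynomials of degree <= t matter.
   Restriction sigma^[d] is then the same function viewed on R[X]_d. *)
Definition lin_on (t : nat) (sigma : poly -> R) : Prop :=
  forall (a : R) (p q : poly), deg_le p t -> deg_le q t ->
    sigma (a *: p + q) = a * sigma p + sigma q.

Definition inL (t : nat) (G : seq poly) (sigma : poly -> R) : Prop :=
  lin_on t sigma /\ forall p, inQt t G p -> 0 <= sigma p.

End Defs.

(* Main.v *)
Require Import Defs.
From HB Require Import structures.
From mathcomp Require Import all_boot all_order all_algebra.
From mathcomp Require Import reals.
From mathcomp Require Import mpoly.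
From mathcomp Require Import ring lra zify.
Import Order.TTheory GRing.Theory Num.Theory.
Local Open Scope ring_scope.
Set Implicit Arguments. Unset Strict Implicit.

Section Aux.
Variables (R : realType) (n : nat).
Notation P := {mpoly R[n]}.
Implicit Types (p q f g u : P) (G : seq P) (sigma : P -> R).

Lemma msizeMle p q : (msize (p * q) <= (msize p + msize q).-1)%N.
Proof.
have [->|nzp] := eqVneq p 0; first by rewrite mul0r msize0.
have [->|nzq] := eqVneq q 0; first by rewrite mulr0 msize0.
by rewrite msizeM.
Qed.

Lemma deg_le_mono p a b : (a <= b)%N -> deg_le p a -> deg_le p b.
Proof. rewrite /deg_le => ab h; apply: leq_trans h _; by rewrite ltnS. Qed.

Lemma deg_leM p q a b : deg_le p a -> deg_le q b -> deg_le (p * q) (a + b).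
Proof.
rewrite /deg_le => ha hb; apply: leq_trans (msizeMle p q) _.
have := leq_add ha hb; rewrite addSn addnS /=; case: (msize p + msize q)%N => //.
Qed.

Lemma deg_leD p q a : deg_le p a -> deg_le q a -> deg_le (p + q) a.
Proof.
rewrite /deg_le => ha hb; apply: leq_trans (msizeD_le _ _) _.
by rewrite geq_max ha hb.
Qed.

Lemma deg_leN p a : deg_le (- p) a = deg_le p a.
Proof. by rewrite /deg_le msizeN. Qed.

Lemma deg_leZ (c : R) p a : deg_le p a -> deg_le (c *: p) a.
Proof. rewrite /deg_le => h; exact: leq_trans (msizeZ_le _ _) h. Qed.

Lemma deg_le0 a : deg_le (0 : P) a.
Proof. by rewrite /deg_le msize0. Qed.

Lemma deg_le1 a : deg_le (1 : P) a.
Proof. by rewrite /deg_le msize1. Qed.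

Lemma deg_leX p a i : deg_le p a -> deg_le (p ^+ i) (i * a).
Proof.
move=> h; elim: i => [|i IH]; first by rewrite expr0; apply: deg_le1.
by rewrite exprS mulSn; apply: deg_leM.
Qed.

Lemma deg_le_sum (N : nat) (F : 'I_N -> P) a :
  (forall i, deg_le (F i) a) -> deg_le (\sum_(i < N) F i) a.
Proof.
move=> h; apply: (big_ind (fun x => deg_le x a)) => //.
- exact: deg_le0.
- move=> x y; exact: deg_leD.
Qed.

Lemma lin0 t sigma : lin_on t sigma -> sigma 0 = 0.
Proof.
move=> L; have := L 1 0 0 (deg_le0 _) (deg_le0 _).
rewrite scale1r addr0 mul1r => H; lra.
Qed.

Lemma linD t sigma p q : lin_on t sigma -> deg_le p t -> deg_le q t ->
  sigma (p + q) = sigma p + sigma q.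
Proof. by move=> L hp hq; rewrite -[p]scale1r L // mul1r scale1r. Qed.

Lemma linZ t sigma c p : lin_on t sigma -> deg_le p t ->
  sigma (c *: p) = c * sigma p.
Proof.
move=> L hp; rewrite -[c *: p]addr0 (L c p 0) //; last exact: deg_le0.
by rewrite (lin0 L) addr0.
Qed.

Lemma linN t sigma p : lin_on t sigma -> deg_le p t -> sigma (- p) = - sigma p.
Proof. by move=> L hp; rewrite -scaleN1r (linZ _ L hp) mulN1r. Qed.

Lemma lin_sum t sigma (N : nat) (F : 'I_N -> P) : lin_on t sigma ->
  (forall i, deg_le (F i) t) -> sigma (\sum_(i < N) F i) = \sum_(i < N) sigma (F i).
Proof.
move=> L h; elim: N F h => [|N IH] F h; first by rewrite !big_ord0 (lin0 L).
rewrite !big_ord_recr /= (linD L) ?IH //; exact: deg_le_sum.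
Qed.

Lemma lin_mono t t' sigma : (t <= t')%N -> lin_on t' sigma -> lin_on t sigma.
Proof. move=> tt L a p q hp hq; apply: L; [exact: deg_le_mono tt hp | exact: deg_le_mono tt hq]. Qed.

Lemma term_deg s g t : (s = 0 \/ (msize s + msize g <= t.+2)%N) -> deg_le (s * g) t.
Proof.
case=> [->|h]; first by rewrite mul0r; apply: deg_le0.
rewrite /deg_le; apply: leq_trans (msizeMle _ _) _.
by move: h; case: (msize s + msize g)%N.
Qed.

Lemma inQt_deg t G p : inQt t G p -> deg_le p t.
Proof.
case=> s0 [s [_ h0 _ hi ->]]; apply: deg_leD => //.
apply: deg_le_sum => i; apply: term_deg; exact: (hi i (ltn_ord i)).2.
Qed.

Lemma inQt_mono t t' G p : (t <= t')%N -> inQt t G p -> inQt t' G p.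
Proof.
move=> tt [s0 [s [h1 h2 h3 h4 h5]]]; exists s0, s; split => //.
  exact: deg_le_mono h2.
move=> i /h4 [a [b|b]]; split => //; [by left | right].
by apply: leq_trans b _; rewrite !ltnS.
Qed.

Lemma inL_mono t t' G sigma : (t <= t')%N -> inL t' G sigma -> inL t G sigma.
Proof.
move=> tt [L h]; split; first exact: lin_mono L.
move=> p hp; apply: h; exact: inQt_mono hp.
Qed.

Lemma sos0 : is_sos (0 : P).
Proof. by exists [::]; rewrite big_nil. Qed.

Lemma sos_sq f : is_sos (f ^+ 2).
Proof. by exists [:: f]; rewrite big_seq1. Qed.

Lemma sos_inQt t G s : is_sos s -> deg_le s t -> inQt t G s.
Proof.
move=> hs hd; exists s, (nseq (size G) 0); split => //.
- by rewrite size_nseq.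
- by move=> i hi; rewrite nth_nseq hi; split; [exact: sos0 | left].
- rewrite big1 ?addr0 // => i _; by rewrite nth_nseq ltn_ord mul0r.
Qed.

Lemma sos_nonneg t G sigma s : inL t G sigma -> is_sos s -> deg_le s t ->
  0 <= sigma s.
Proof. by move=> [_ h] hs hd; apply: h; apply: sos_inQt. Qed.


Lemma cs t G sigma f g a : inL t G sigma -> deg_le f a -> deg_le g a ->
  (a + a <= t)%N -> sigma (f * f) = 0 -> sigma (f * g) = 0.
Proof.
move=> hL hf hg hat h0; have L := hL.1.
have dff : deg_le (f * f) t by apply: deg_le_mono hat (deg_leM hf hf).
have dfg : deg_le (f * g) t by apply: deg_le_mono hat (deg_leM hf hg).
have dgg : deg_le (g * g) t by apply: deg_le_mono hat (deg_leM hg hg).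
set c := sigma (f * g); set b := sigma (g * g).
have hb : 0 <= b by apply: sos_nonneg hL _ dgg; rewrite -expr2; apply: sos_sq.
have key : forall l : R, 0 <= l * c + l * c + l * l * b.
  move=> l.
  have E : (f + l *: g) ^+ 2 = f * f + (l *: (f * g) + l *: (f * g)) + (l * l) *: (g * g).
    by rewrite -!mul_mpolyC rmorphM /=; ring.
  have D : deg_le ((f + l *: g) ^+ 2) t.
    apply: deg_le_mono _ (deg_leX 2 (deg_leD hf (deg_leZ l hg))).
    by rewrite mul2n -addnn.
  have := sos_nonneg hL (sos_sq _) D.
  rewrite E (linD L) ?(linD L) ?(linZ _ L) ?h0 ?add0r //;
   by repeat first [apply: deg_leD | apply: deg_leZ | assumption].
have := key (- c / (b + 1)).
have Hb1 : b + 1 != 0 by rewrite gt_eqF // ltr_wpDl.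
have -> : - c / (b + 1) * c + - c / (b + 1) * c + - c / (b + 1) * (- c / (b + 1)) * b
   = (c ^+ 2 * (b + 2)) * (- ((b + 1) ^+ 2)^-1) by field.
move=> H.
have Hp : 0 < ((b + 1) ^+ 2)^-1 by rewrite invr_gt0 exprn_gt0 // ltr_wpDl.
have H2 : c ^+ 2 * (b + 2) <= 0.
  move: H; rewrite mulrN oppr_ge0 pmulr_lle0 //.
have H3 : c ^+ 2 <= 0 by nra.
by apply/eqP; rewrite -sqrf_eq0 eq_le H3 sqr_ge0.
Qed.


Lemma chain t G sigma p e m : inL t G sigma -> deg_le p e ->
  (m.+2 * e + m.+2 * e <= t)%N -> sigma (p ^+ (2 * m)) = 0 -> sigma (p * p) = 0.
Proof.
move=> hL hp ht; case: m ht => [|m] ht.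
  rewrite muln0 expr0 => h1.
  rewrite -[p * p]mul1r; apply: (cs hL (deg_le1 _) _ ht).
    apply: deg_le_mono (deg_leM hp hp); lia.
  by rewrite mulr1.
suff: forall j, (j <= m)%N -> sigma (p ^+ (2 * j.+1)) = 0 -> sigma (p * p) = 0.
  by apply.
elim=> [|j IH] hj; first by rewrite muln1 expr2.
move=> h; apply: IH; first lia.
have -> : p ^+ (2 * j.+1) = p ^+ j.+2 * p ^+ j by rewrite -exprD; congr (_ ^+ _); lia.
apply: (cs hL _ _ ht).
- apply: deg_le_mono (deg_leX _ hp); apply: leq_mul => //; lia.
- apply: deg_le_mono (deg_leX _ hp); apply: leq_mul => //; lia.
- by rewrite -exprD; have -> : (j.+2 + j.+2 = 2 * j.+2)%N by lia.
Qed.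


Lemma per_h G p d : real_radical (suppQ G) p -> deg_le p d ->
  exists k, forall sigma, inL k G sigma ->
    forall u, deg_le u d.+1 -> sigma (u * p) = 0.
Proof.
case=> m [s [hs [[t1 hq1] [t2 hq2]]]] hp.
exists (t1 + t2 + m.+2 * d.+1 + m.+2 * d.+1)%N => sigma hL u hu.
have L := hL.1.
have hp' : deg_le p d.+1 := deg_le_mono (leqnSn d) hp.
set k := (t1 + t2 + m.+2 * d.+1 + m.+2 * d.+1)%N.
have dq : deg_le (p ^+ (2 * m) + s) k.
  by apply: deg_le_mono (inQt_deg hq1); rewrite /k; lia.
have q1 := hL.2 _ (inQt_mono (_ : (t1 <= k)%N) hq1).
have q2 := hL.2 _ (inQt_mono (_ : (t2 <= k)%N) hq2).
have q0 : sigma (p ^+ (2 * m) + s) = 0.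
  have := q2 ltac:(rewrite /k; lia); rewrite (linN L dq).
  have := q1 ltac:(rewrite /k; lia); lra.
have dP : deg_le (p ^+ (2 * m)) k.
  by apply: deg_le_mono (deg_leX _ hp'); rewrite /k; nia.
have ds : deg_le s k.
  have dN : deg_le (- p ^+ (2 * m)) k by rewrite deg_leN.
  by have := deg_leD dq dN; rewrite addrC addKr.
have sP : 0 <= sigma (p ^+ (2 * m)).
  by apply: sos_nonneg hL _ dP; rewrite mulnC exprM; apply: sos_sq.
have sS : 0 <= sigma s by apply: sos_nonneg hL hs ds.
have P0 : sigma (p ^+ (2 * m)) = 0.
  by move: q0; rewrite (linD L dP ds); lra.
have pp := chain hL hp' (_ : (m.+2 * d.+1 + m.+2 * d.+1 <= k)%N) P0.
rewrite mulrC; apply: (cs hL hp' hu _ (pp _)); rewrite /k; nia.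
Qed.


Lemma sum_cat (s1 s2 G1 G2 : seq P) : size s1 = size G1 ->
  \sum_(i < size (G1 ++ G2)) (s1 ++ s2)`_i * (G1 ++ G2)`_i =
  \sum_(i < size G1) s1`_i * G1`_i + \sum_(i < size G2) s2`_i * G2`_i.
Proof.
move=> hs.
rewrite -(big_mkord xpredT (fun i => (s1 ++ s2)`_i * (G1 ++ G2)`_i)).
rewrite -(big_mkord xpredT (fun i => s1`_i * G1`_i)).
rewrite -(big_mkord xpredT (fun i => s2`_i * G2`_i)).
rewrite size_cat (@big_cat_nat _ _ _ (size G1) 0 (size G1 + size G2)) ?leq_addr //=.
congr (_ + _).
  apply: eq_big_nat => i /andP [_ hi]; by rewrite !nth_cat hs hi.
rewrite (big_addn 0 _ (size G1)) addKn.
apply: eq_big_nat => i _; rewrite !nth_cat hs ltnNge leq_addl /= addnK //.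
Qed.


Definition Bsum t G B := exists s : seq P, [/\ size s = size G,
  (forall i, (i < size G)%N -> s`_i = 0 \/ (msize s`_i + msize G`_i <= t.+2)%N)
  & B = \sum_(i < size G) s`_i * G`_i].

Lemma split_Q t G1 G2 p : inQt t (G1 ++ G2) p ->
  exists A B, [/\ p = A + B, inQt t G1 A & Bsum t G2 B].
Proof.
case=> s0 [s [h1 h2 h3 h4 ->]].
have hs1 : size (take (size G1) s) = size G1.
  rewrite size_take h3 size_cat; case: ltnP => // H; by apply/eqP; rewrite eqn_leq H leq_addr.
have hs2 : size (drop (size G1) s) = size G2 by rewrite size_drop h3 size_cat addKn.
rewrite -{1}(cat_take_drop (size G1) s) sum_cat //.
exists (s0 + \sum_(i < size G1) (take (size G1) s)`_i * G1`_i).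
exists (\sum_(i < size G2) (drop (size G1) s)`_i * G2`_i).
split; first by rewrite addrA.
  exists s0, (take (size G1) s); split => // i hi.
  have := h4 i; rewrite size_cat nth_cat hi nth_take //; apply.
  exact: ltn_addr.
exists (drop (size G1) s); split => // i hi.
have := h4 (size G1 + i)%N; rewrite size_cat ltn_add2l nth_drop nth_cat.
have -> : (size G1 + i < size G1)%N = false by rewrite ltnNge leq_addr.
rewrite addKn => /(_ hi) [].
by move=> _ [->|?]; [left|right].
Qed.

Lemma pad_Q t G1 G2 p : inQt t G1 p -> inQt t (G1 ++ G2) p.
Proof.
case=> s0 [s [h1 h2 h3 h4 ->]].
exists s0, (s ++ nseq (size G2) 0); split => //.
- by rewrite !size_cat size_nseq h3.
- move=> i; rewrite size_cat !nth_cat h3; case: ifP => hi _; first exact: h4.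
  by rewrite nth_nseq; case: ifP => _; split; try exact: sos0; left.
- rewrite sum_cat // [X in _ + (_ + X)]big1 ?addr0 // => i _.
  by rewrite nth_nseq ltn_ord mul0r.
Qed.

Lemma bsum_zero t G B sigma : lin_on t sigma ->
  (forall x, x \in G -> forall u, deg_le u t.+1 -> sigma (u * x) = 0) ->
  Bsum t G B -> sigma B = 0.
Proof.
move=> L hG [s [h1 h2 ->]].
rewrite (lin_sum L); last by move=> i; apply: term_deg; apply: h2.
apply: big1 => i _; have [->|hi] := h2 i (ltn_ord i).
  by rewrite mul0r (lin0 L).
apply: hG; first by apply: mem_nth.
by rewrite /deg_le; apply: leq_trans hi; apply: leq_addr.
Qed.

Lemma pm_mem (h : seq P) x : x \in pm h -> exists2 y, y \in h & (x = y \/ x = - y).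
Proof.
case/flatten_mapP => y hy; rewrite !inE => /orP [] /eqP ->; exists y => //;
  by [left | right].
Qed.


Lemma Bsum_deg t G B : Bsum t G B -> deg_le B t.
Proof. case=> s [_ h ->]; apply: deg_le_sum => i; apply: term_deg; exact: h. Qed.

Lemma inQt_nil t p : inQt t [::] p -> is_sos p /\ deg_le p t.
Proof. by case=> s0 [s [h1 h2 _ _ ->]]; rewrite big_ord0 addr0. Qed.

End Aux.
Unset Implicit Arguments.

Theorem mainTheorem13 (R : realType) (n : nat) (g h : seq {mpoly R[n]}) (d : nat) :
  ideal_sub h (real_radical (suppQ g)) ->
  (forall i, (i < size h)%N -> deg_le h`_i d) ->
  exists k : nat, (d <= k)%N /\
    (forall sigma : {mpoly R[n]} -> R,
        inL k g sigma -> inL d (g ++ pm h) sigma) /\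
    (forall sigma : {mpoly R[n]} -> R,
        inL d (g ++ pm h) sigma -> inL d g sigma) /\
    (forall sigma : {mpoly R[n]} -> R,
        inL k g sigma -> inL d (pm h) sigma).
Proof.
move=> Hid Hdeg.
pose Pk k i := forall sigma, inL k g sigma ->
  forall u, deg_le u d.+1 -> sigma (u * h`_i) = 0.
have Hh : forall i, (i < size h)%N -> exists k, Pk k i.
  move=> i hi; apply: per_h (Hdeg i hi).
  have := Hid [seq (j == i)%:R | j <- iota 0 (size h)].
  rewrite (bigD1 (Ordinal hi)) //= big1 ?addr0.
    rewrite (nth_map 0%N) ?size_iota // nth_iota // add0n eqxx mul1r //.
  move=> j hj; rewrite (nth_map 0%N) ?size_iota // nth_iota // add0n.
  suff -> : (val j == i) = false by rewrite mul0r.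
  by apply/negbTE; move: hj; apply: contra => /eqP E; apply/eqP/val_inj.
have Hmono : forall k k' i, (k <= k')%N -> Pk k i -> Pk k' i.
  move=> k k' i kk H sigma hL; apply: H; exact: inL_mono kk hL.
have [k [dk Hk]] : exists k, (d <= k)%N /\ forall i, (i < size h)%N -> Pk k i.
  suff: forall N, (N <= size h)%N -> exists k, (d <= k)%N /\ forall i, (i < N)%N -> Pk k i.
    by move/(_ (size h) (leqnn _)).
  elim=> [|N IH] hN; first by exists d; split.
  have [k1 [dk1 H1]] := IH (ltnW hN).
  have [k2 H2] := Hh N hN.
  exists (maxn k1 k2); split; first by rewrite leq_max dk1.
  move=> i; rewrite ltnS leq_eqVlt => /orP [/eqP ->|hi].
    by apply: Hmono H2; rewrite leq_maxr.
  by apply: Hmono (H1 i hi); rewrite leq_maxl.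
have Hpm : forall sigma, inL k g sigma -> forall x, x \in pm h ->
    forall u, deg_le u d.+1 -> sigma (u * x) = 0.
  move=> sigma hL x /pm_mem [y /(nthP 0) [j hj <-] [->| ->]] u hu.
    exact: Hk.
  rewrite mulrN -mulNr; apply: Hk => //; by rewrite deg_leN.
have C1 : forall sigma, inL k g sigma -> inL d (g ++ pm h) sigma.
  move=> sigma hL; have L := lin_mono dk hL.1; split => // p.
  case/split_Q => A [B [-> hA hB]].
  rewrite (linD L (inQt_deg hA) (Bsum_deg hB)).
  rewrite (bsum_zero L _ hB) ?addr0; first exact: (inL_mono dk hL).2.
  exact: (Hpm sigma hL).
exists k; split => //; split => //; split.
  move=> sigma hL; split; first exact: hL.1.
  by move=> p hp; apply: hL.2; apply: pad_Q.
move=> sigma hL; have L := lin_mono dk hL.1; split => // p hp.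
have := @split_Q R n d [::] (pm h) p hp.
case=> A [B [-> hA hB]].
have [sA dA] := inQt_nil hA.
rewrite (linD L dA (Bsum_deg hB)) (bsum_zero L _ hB) ?addr0.
  exact: (sos_nonneg (inL_mono dk hL) sA dA).
exact: (Hpm sigma hL).
Qed.
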